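(* Let $f,g\in\mathbb{F}[Y,Z]$. If $g=\sum_{i\in[r]}g_ih_i$ with $g_i\in\mathbb{F}[Y]$ and $h_i\in\mathbb{F}[Z]$, then $\mathrm{maxrank}(M_{fg})\le r\cdot\mathrm{maxrank}(M_f)$.
   Context: $\mathbb{F}$ is a field, $Y=\{y_1,\dots,y_m\}$ and $Z=\{z_1,\dots,z_m\}$ are disjoint sets of variables. For $f\in\mathbb{F}[Y,Z]$, the polynomial coefficient matrix $M_f$ is the $2^m\times 2^m$ matrix with entries in $\mathbb{F}[Y,Z]$, rows indexed by monic multilinear monomials $p$ in $Y$ and columns by monic multilinear monomials $q$ in $Z$, where $M_f(p,q)=G$ if and only if $f$ can be uniquely written as $f=pq\,G+Q$ with $G$ containing no variable other than those present in $p$ and $q$, and $Q$ having no monomial which is divisible by $pq$ and contains only variables present in $p$ and $q$. For $S:Y\cup Z\to\mathbb{F}$, $M_f|_S$ is obtained by evaluating each entry at $S$, and $\mathrm{maxrank}(M_f)=\max_S\mathrm{rank}(M_f|_S)$. *)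

(* Defs.v *)
From HB Require Import structures.
From mathcomp Require Import all_boot all_order all_algebra.
From mathcomp Require Import mpoly.
From Stdlib Require Import ClassicalDescription.

Set Implicit Arguments.
Unset Strict Implicit.
Unset Printing Implicit Defensive.

Import Order.TTheory GRing.Theory.
Local Open Scope ring_scope.

(* Variables of F[Y,Z]: the 2m variables are indexed by 'I_(m + m);
   y_i is the variable  lshift m i  and  z_i  is the variable  rshift m i. *)
Definition yvar (m : nat) (i : 'I_m) : 'I_(m + m) := lshift m i.
Definition zvar (m : nat) (i : 'I_m) : 'I_(m + m) := rshift m i.

Definition inY (F : fieldType) (m : nat) (p : {mpoly F[m + m]}) : Prop :=
  forall mu, mu \in msupp p -> forall i : 'I_m, mu (zvar i) = 0%N.

Definition inZ (F : fieldType) (m : nat) (p : {mpoly F[m + m]}) : Prop :=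
  forall mu, mu \in msupp p -> forall i : 'I_m, mu (yvar i) = 0%N.

(* A monic multilinear monomial p in Y is identified with the set A of
   indices of its variables (p = prod_{i in A} y_i), likewise q in Z with B.
   The variables present in p q: *)
Definition pqvars (m : nat) (A B : {set 'I_m}) : {set 'I_(m + m)} :=
  [set yvar i | i in A] :|: [set zvar j | j in B].

Definition pqmon (m : nat) (A B : {set 'I_m}) : 'X_{1..m + m} :=
  [multinom ((k \in pqvars A B) : nat) | k < m + m].

(* Entry M_f(p,q) = G, where f = p q G + Q, G only has variables among those
   of p q, and Q has no monomial divisible by p q using only variables of p q.
   G is therefore (1/pq) times the part of f made of the monomials that are
   divisible by pq and use only variables of pq: *)
Definition Mentry (F : fieldType) (m : nat) (f : {mpoly F[m + m]})
    (A B : {set 'I_m}) : {mpoly F[m + m]} :=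
  \sum_(mu <- msupp f |
        [forall k, (pqmon A B k <= mu k)%N && ((mu k != 0%N) ==> (k \in pqvars A B))])
     f@_mu *: 'X_[(mu - pqmon A B)%MM].

(* The polynomial coefficient matrix evaluated at S : Y u Z -> F.
   Rows/columns are indexed by the 2^m subsets of 'I_m (i.e. the monic
   multilinear monomials in Y, resp. Z), enumerated via enum_val. *)
Definition Meval (F : fieldType) (m : nat) (f : {mpoly F[m + m]})
    (S : 'I_(m + m) -> F) : 'M[F]_(#|{set 'I_m}|) :=
  \matrix_(i, j) (Mentry f (enum_val i) (enum_val j)).@[S].

(* maxrank(M_f) = max_S rank(M_f|_S); the rank is at most #|{set 'I_m}|, so the
   maximum of the attained values below that bound is taken. *)
Definition rank_attained (F : fieldType) (m : nat) (f : {mpoly F[m + m]})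
    (k : nat) : bool :=
  if excluded_middle_informative (exists S, \rank (Meval f S) = k)
  then true else false.

Definition maxrank (F : fieldType) (m : nat) (f : {mpoly F[m + m]}) : nat :=
  (\max_(k < (#|{set 'I_m}|).+1 | rank_attained f k) k)%N.

(* Main.v *)
Require Import Defs.
From HB Require Import structures.
From mathcomp Require Import all_boot all_order all_algebra.
From mathcomp Require Import mpoly ssrcomplements.
From mathcomp Require Import zify.
From Stdlib Require Import ClassicalDescription.
Set Implicit Arguments. Unset Strict Implicit. Unset Printing Implicit Defensive.
Import Order.TTheory GRing.Theory.
Local Open Scope ring_scope.

Section L.
Variables (F : fieldType) (n : nat) (V : lmodType F).
Variable phi : 'X_{1..n} -> V.

Definition L (p : {mpoly F[n]}) : V := \sum_(mu <- msupp p) p@_mu *: phi mu.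

Lemma Lw k p : (msize p <= k)%N -> L p = \sum_(mu : 'X_{1..n < k}) p@_mu *: phi mu.
Proof.
move=> lt_pk; pose I : subFinType _ := 'X_{1..n < k}.
rewrite /L (big_mksub I) //=; first last.
  by move=> x /msize_mdeg_lt /leq_trans; apply.
  by rewrite msupp_uniq.
by rewrite big_rmcond //= => i; move/memN_msupp_eq0 ->; rewrite scale0r.
Qed.

Lemma LD p q : L (p + q) = L p + L q.
Proof.
pose k := maxn (msize p) (msize q).
rewrite (@Lw k (p + q)); last by apply: leq_trans (msizeD_le _ _) _; rewrite geq_max !(leq_maxl, leq_maxr).
rewrite (@Lw k p) ?leq_maxl // (@Lw k q) ?leq_maxr // -big_split /=.
by apply: eq_bigr => i _; rewrite mcoeffD scalerDl.
Qed.

Lemma L0 : L 0 = 0.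
Proof. by rewrite /L msupp0 big_nil. Qed.

Lemma LZ c p : L (c *: p) = c *: L p.
Proof.
rewrite (@Lw (msize p) (c *: p)) ?msizeZ_le // (@Lw (msize p) p) //.
rewrite scaler_sumr; apply: eq_bigr => i _; by rewrite mcoeffZ scalerA.
Qed.

Lemma LX mu : L 'X_[mu] = phi mu.
Proof. by rewrite /L msuppX big_seq1 mcoeffX eqxx scale1r. Qed.

Lemma L_sum I (r : seq I) P (G : I -> {mpoly F[n]}) :
  L (\sum_(i <- r | P i) G i) = \sum_(i <- r | P i) L (G i).
Proof. exact: (big_morph L LD L0). Qed.

End L.

Section E.
Variables (F : fieldType) (n : nat).
Definition supp (mu : 'X_{1..n}) : {set 'I_n} := [set k | mu k != 0%N].
Definition ind (V : {set 'I_n}) : 'X_{1..n} := [multinom ((k \in V) : nat) | k < n].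
Definition e (V : {set 'I_n}) (mu : 'X_{1..n}) : {mpoly F[n]} :=
  if supp mu == V then 'X_[(mu - ind V)%MM] else 0.
Definition c (W V : {set 'I_n}) (nu : 'X_{1..n}) : {mpoly F[n]} :=
  if W :|: supp nu == V then 'X_[(nu - ind (V :\: W))%MM] else 0.
Definition E V (f : {mpoly F[n]}) := L (e V) f.
Definition C W V (g : {mpoly F[n]}) := L (c W V) g.

Lemma suppD mu nu : supp (mu + nu)%MM = supp mu :|: supp nu.
Proof.
apply/setP => k; rewrite !inE mnmDE.
by case: (mu k) => [|a]; case: (nu k).
Qed.

Lemma e_mono V mu nu :
  e V (mu + nu)%MM = \sum_(W : {set 'I_n}) e W mu * c W V nu.
Proof.
rewrite (bigD1 (supp mu)) //= big1 ?addr0; last first.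
  by move=> W /negbTE; rewrite /e eq_sym => ->; rewrite mul0r.
rewrite /e /c eqxx suppD; case: eqP => HV; last by rewrite mulr0.
rewrite -mpolyXD; congr 'X_[_]; apply/mnmP => k.
rewrite !(mnmDE, mnmBE, mnmE) -HV !inE.
by case: (mu k) => [|a]; case: (nu k) => [|b] /=; lia.
Qed.

Lemma E_mul V f g : E V (f * g) = \sum_(W : {set 'I_n}) E W f * C W V g.
Proof.
rewrite {1}(mpolyE f) {1}(mpolyE g) mulr_suml /E L_sum.
under eq_bigr do rewrite mulr_sumr L_sum.
under [RHS]eq_bigr do rewrite /L mulr_suml.
rewrite [RHS]exchange_big /=; apply: eq_bigr => mu _.
under [RHS]eq_bigr do rewrite mulr_sumr.
rewrite [RHS]exchange_big /=; apply: eq_bigr => nu _.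
rewrite -scalerAl -scalerAr scalerA -mpolyXD LZ LX e_mono scaler_sumr.
by apply: eq_bigr => W _; rewrite -scalerAl -scalerAr scalerA.
Qed.
End E.

Section UV.
Variables (F : fieldType) (m : nat) (u v : 'I_m -> 'I_(m + m)).
Hypotheses (u_inj : injective u) (v_inj : injective v)
  (uv_neq : forall i j, u i != v j)
  (cover : forall k, (exists i, k = u i) \/ (exists j, k = v j)).

Definition pqg (A B : {set 'I_m}) := u @: A :|: v @: B.

Lemma mem_u i A B : (u i \in pqg A B) = (i \in A).
Proof.
rewrite in_setU mem_imset //; case: (i \in A) => //=.
by apply/negbTE/imsetP => -[j _ /eqP]; rewrite (negbTE (uv_neq _ _)).
Qed.

Lemma mem_v j A B : (v j \in pqg A B) = (j \in B).
Proof.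
rewrite in_setU (mem_imset _ _ v_inj); case: (j \in B) => //=; rewrite ?orbF ?orbT //.
by apply/negbTE/imsetP => -[i _ /eqP]; rewrite eq_sym (negbTE (uv_neq _ _)).
Qed.

Lemma uvI i (B : {set 'I_m}) : (u i \in v @: B) = false.
Proof. by apply/negbTE/imsetP => -[j _ /eqP]; rewrite (negbTE (uv_neq _ _)). Qed.

Lemma vuI j (A : {set 'I_m}) : (v j \in u @: A) = false.
Proof. by apply/negbTE/imsetP => -[i _ /eqP]; rewrite eq_sym (negbTE (uv_neq _ _)). Qed.

Variable g : {mpoly F[m + m]}.
Hypothesis Hg : forall nu, nu \in msupp g -> forall j, nu (v j) = 0%N.

Lemma supp_v nu j : nu \in msupp g -> (v j \in supp nu) = false.
Proof. by move=> H; rewrite inE Hg. Qed.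

Lemma E_mulg (f : {mpoly F[m + m]}) A B :
  E (pqg A B) (f * g) =
  \sum_(A1 : {set 'I_m}) E (pqg A1 B) f * C (pqg A1 set0) (pqg A set0) g.
Proof.
rewrite E_mul (@partition_big _ _ _ _ _ _ xpredT (fun W : {set _} => u @^-1: W) xpredT) //=.
apply: eq_bigr => A1 _.
have HA1 : u @^-1: pqg A1 B == A1.
  by apply/eqP/setP => i; rewrite inE mem_u.
rewrite (bigD1 (pqg A1 B)) //= big1 ?addr0; last first.
  move=> W /andP[/eqP HW Hne]; apply/eqP; rewrite mulf_eq0; apply/orP; right.
  apply/eqP; rewrite /C /L big1_seq // => nu /andP[_ Hnu]; rewrite /c.
  case: eqP => H; last by rewrite scaler0.
  exfalso; move/negP: Hne; apply; apply/eqP/setP => k.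
  case: (cover k) => [[i ->]|[j ->]].
    by rewrite mem_u -HW inE.
  by rewrite mem_v -(mem_v j A B) -H in_setU supp_v // orbF.
congr (_ * _); rewrite /C /L; apply: eq_big_seq => nu Hnu; congr (_ *: _).
rewrite /c; have -> : pqg A B :\: pqg A1 B = pqg A set0 :\: pqg A1 set0.
  apply/setP => k; case: (cover k) => [[i ->]|[j ->]];
  by rewrite !in_setD ?mem_u ?mem_v ?in_set0 ?andNb ?andbF.
suff -> : (pqg A1 B :|: supp nu == pqg A B) = (pqg A1 set0 :|: supp nu == pqg A set0) by [].
apply/eqP/eqP => H; apply/setP => k; move/setP: H => /(_ k);
case: (cover k) => [[i ->]|[j ->]];
rewrite !in_setU ?uvI ?vuI ?(mem_imset _ _ u_inj) ?(mem_imset _ _ v_inj) ?in_set0 ?supp_v //= ?orbF //.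
Qed.
End UV.

Section Main.
Variables (F : fieldType) (m : nat).

Lemma yz_inj : injective (@yvar m). Proof. exact: lshift_inj. Qed.
Lemma zy_inj : injective (@zvar m). Proof. exact: rshift_inj. Qed.
Lemma yz_neq i j : @yvar m i != zvar j. Proof. by rewrite /yvar /zvar eq_lrshift. Qed.
Lemma zy_neq i j : @zvar m i != yvar j. Proof. by rewrite /yvar /zvar eq_rlshift. Qed.
Lemma yz_cover (k : 'I_(m + m)) : (exists i, k = yvar i) \/ (exists j, k = zvar j).
Proof. by rewrite -(splitK k); case: (split k) => [a|b]; [left; exists a | right; exists b]. Qed.
Lemma zy_cover (k : 'I_(m + m)) : (exists i, k = zvar i) \/ (exists j, k = yvar j).
Proof. by case: (yz_cover k) => ?; [right|left]. Qed.

Lemma Mentry_E (f : {mpoly F[m + m]}) A B :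
  Mentry f A B = E (pqvars A B) f.
Proof.
rewrite /Mentry /E /L big_mkcond /=; apply: eq_bigr => mu _.
rewrite /e; set V := pqvars A B.
have -> : [forall k, (pqmon A B k <= mu k)%N && ((mu k != 0%N) ==> (k \in V))]
          = (supp mu == V).
  apply/forallP/eqP => [H|H k].
    apply/setP => k; have := H k; rewrite /pqmon mnmE -/V [k \in supp mu]inE.
    by case: (k \in V); case: (mu k).
  rewrite /pqmon mnmE -/V -H [k \in supp mu]inE.
  by case: (mu k).
by case: ifP => _; rewrite ?scaler0.
Qed.

Lemma pqvarsE A B : pqvars A B = pqg (@yvar m) (@zvar m) A B.
Proof. by []. Qed.

Lemma pqvarsE' A B : pqvars A B = pqg (@zvar m) (@yvar m) B A.
Proof. by rewrite /pqvars /pqg setUC. Qed.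

Definition ev (a : 'I_#|{set 'I_m}|) : {set 'I_m} := enum_val a.

Lemma sum_sets (G : {set 'I_m} -> F) :
  \sum_(A1 : {set 'I_m}) G A1 = \sum_(a : 'I_#|{set 'I_m}|) G (ev a).
Proof.
rewrite (reindex ev) //; apply: onW_bij; exact: enum_val_bij.
Qed.

Lemma Meval_mulY (f g : {mpoly F[m + m]}) S : inY g ->
  Meval (f * g) S =
  (\matrix_(a, a1) (C (pqvars (ev a1) set0) (pqvars (ev a) set0) g).@[S])
    *m Meval f S.
Proof.
move=> Hg; apply/matrixP => a b; rewrite !mxE Mentry_E pqvarsE.
rewrite (E_mulg yz_inj zy_inj yz_neq yz_cover Hg) raddf_sum /= sum_sets.
apply: eq_bigr => a1 _; rewrite !mxE Mentry_E mevalM mulrC.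
by [].
Qed.

Lemma Meval_mulZ (f h : {mpoly F[m + m]}) S : inZ h ->
  Meval (f * h) S =
  Meval f S *m
  (\matrix_(b1, b) (C (pqvars set0 (ev b1)) (pqvars set0 (ev b)) h).@[S]).
Proof.
move=> Hh; apply/matrixP => a b; rewrite !mxE Mentry_E pqvarsE'.
rewrite (E_mulg zy_inj yz_inj zy_neq zy_cover Hh) raddf_sum /= sum_sets.
apply: eq_bigr => b1 _; rewrite !mxE Mentry_E mevalM pqvarsE' !pqvarsE'.
by [].
Qed.
End Main.

Lemma Meval_sum (F : fieldType) (m r : nat) (P : 'I_r -> {mpoly F[m + m]}) S :
  Meval (\sum_(i < r) P i) S = \sum_(i < r) Meval (P i) S.
Proof.
apply/matrixP => a b; rewrite summxE !mxE Mentry_E /E L_sum raddf_sum.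
by apply: eq_bigr => i _; rewrite !mxE Mentry_E.
Qed.

Lemma rank_sum (F : fieldType) (k r : nat) (M : 'I_r -> 'M[F]_k) :
  (\rank (\sum_(i < r) M i)%R <= \sum_(i < r) \rank (M i))%N.
Proof.
apply: (big_ind2 (fun A n => \rank A <= n)%N); first by rewrite mxrank0.
  by move=> A1 n1 A2 n2 h1 h2; apply: (leq_trans (mxrank_add A1 A2)); apply: leq_add.
by [].
Qed.

Lemma rank_le_maxrank (F : fieldType) (m : nat) (f : {mpoly F[m + m]}) S :
  (\rank (Meval f S) <= maxrank f)%N.
Proof.
have Hk : (\rank (Meval f S) < #|{set 'I_m}|.+1)%N by rewrite ltnS rank_leq_row.
rewrite /maxrank.
apply: (leq_bigmax_cond (F := fun k : 'I_ _ => nat_of_ord k) (Ordinal Hk)).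
rewrite /rank_attained; case: excluded_middle_informative => // [[]].
by exists S.
Qed.

Unset Implicit Arguments.
Set Strict Implicit.

Theorem corollary2 (F : fieldType) (m r : nat) (f g : {mpoly F[m + m]})
    (gs hs : 'I_r -> {mpoly F[m + m]}) :
  (forall i, inY (gs i)) -> (forall i, inZ (hs i)) ->
  g = \sum_(i < r) gs i * hs i ->
  (maxrank (f * g) <= r * maxrank f)%N.
Proof.
move=> HY HZ ->; rewrite /maxrank; apply/bigmax_leqP => k.
rewrite /rank_attained; case: excluded_middle_informative => // [[S HS]] _.
rewrite -HS mulr_sumr Meval_sum.
apply: (leq_trans (rank_sum _)).
rewrite -[X in (_ <= X * _)%N]card_ord -sum_nat_const.
apply: leq_sum => i _; rewrite mulrA Meval_mulZ // Meval_mulY //.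
apply: (leq_trans (mxrankM_maxl _ _)); apply: (leq_trans (mxrankM_maxr _ _)).
exact: rank_le_maxrank.
Qed.
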